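(* With $g=\delta_{\{0\}}$ on $c_c$, we have $\partial(f+g)(0)=\ell^2$, whereas $\partial f(0)+\partial g(0)=\emptyset$. In particular $\partial(f+g)(0)\neq\partial f(0)+\partial g(0)$, although $0\in\operatorname{core}(\operatorname{dom} f-\operatorname{dom} g)$ and both $f$ and $g$ are convex and lower semicontinuous.
   Context: Let $c_c$ be the space of finitely supported real sequences with the $\ell^2$-norm; its dual is identified with $\ell^2$ via $\langle z,y\rangle=\sum_n z_ny_n$. Let $f\colon c_c\to\mathbb{R}$, $f(x)=\sum_{n=1}^\infty \frac{n^2}{2}(x_n-n^{-2})^2$. For convex $h\colon c_c\to(-\infty,\infty]$ and $x$ with $h(x)<\infty$, $\partial h(x)=\{z\in\ell^2:\forall y\in c_c:\ h(y)\ge h(x)+\langle z,y-x\rangle\}$. $\delta_{\{0\}}$ is the indicator function of $\{0\}$, $\operatorname{dom}h=\{x:h(x)<\infty\}$, and $\operatorname{core}$ denotes the algebraic interior. *)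

(* Defs.v *)
From Stdlib Require Import Reals ClassicalDescription.
From Coquelicot Require Import Coquelicot.
Open Scope R_scope.

(* Real sequences; coordinate x_n (n >= 1) of the paper is [x (n-1)],
   i.e. [x k] is the coordinate x_{k+1}. *)
Definition seqR := nat -> R.

Definition cc (x : seqR) : Prop := exists N : nat, forall k, (N <= k)%nat -> x k = 0.

Definition l2 (z : seqR) : Prop := ex_series (fun k => (z k) ^ 2).

Definition pairing (z y : seqR) : R := Series (fun k => z k * y k).

Definition norm2 (v : seqR) : R := sqrt (Series (fun k => (v k) ^ 2)).

Definition zero_seq : seqR := fun _ => 0.
Definition seq_sub (x y : seqR) : seqR := fun k => x k - y k.
Definition seq_add (x y : seqR) : seqR := fun k => x k + y k.

Definition f7 (x : seqR) : Rbar :=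
  Finite (Series (fun k => (INR (S k))^2 / 2 * (x k - / (INR (S k))^2)^2)).

Definition g7 (x : seqR) : Rbar :=
  if excluded_middle_informative (forall k, x k = 0) then Finite 0 else p_infty.

Definition hsum (h1 h2 : seqR -> Rbar) : seqR -> Rbar := fun x => Rbar_plus (h1 x) (h2 x).

Definition subdiff (h : seqR -> Rbar) (x : seqR) (z : seqR) : Prop :=
  l2 z /\ forall y, cc y -> Rbar_le (Rbar_plus (h x) (Finite (pairing z (seq_sub y x)))) (h y).

Definition setsum (A B : seqR -> Prop) (z : seqR) : Prop :=
  exists a b, A a /\ B b /\ forall k, z k = a k + b k.
Definition setdiff (A B : seqR -> Prop) (z : seqR) : Prop :=
  exists a b, A a /\ B b /\ forall k, z k = a k - b k.

Definition dom (h : seqR -> Rbar) (x : seqR) : Prop := cc x /\ h x <> p_infty.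

Definition core (A : seqR -> Prop) (x : seqR) : Prop :=
  A x /\ forall d, cc d -> exists delta, 0 < delta /\
    forall t, 0 <= t <= delta -> A (fun k => x k + t * d k).

Definition convex_cc (h : seqR -> Rbar) : Prop :=
  forall x y, cc x -> cc y -> forall l, 0 < l < 1 ->
    Rbar_le (h (fun k => l * x k + (1 - l) * y k))
            (Rbar_plus (Rbar_mult (Finite l) (h x)) (Rbar_mult (Finite (1 - l)) (h y))).

Definition lsc_cc (h : seqR -> Rbar) : Prop :=
  forall x, cc x -> forall M : R, Rbar_lt (Finite M) (h x) ->
    exists delta, 0 < delta /\
      forall y, cc y -> norm2 (seq_sub y x) < delta -> Rbar_lt (Finite M) (h y).

(* Main.v *)
Require Import Defs.
From Stdlib Require Import Reals Lra Lia ClassicalDescription Classical.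
From Coquelicot Require Import Coquelicot.
Open Scope R_scope.

Lemma sumn_S (u : nat -> R) n : sum_n u (S n) = sum_n u n + u (S n).
Proof. rewrite sum_Sn. reflexivity. Qed.

Lemma sumn_zero (u : nat -> R) n : (forall j, (j <= n)%nat -> u j = 0) -> sum_n u n = 0.
Proof.
  induction n; intros H.
  - rewrite sum_O. apply H; lia.
  - rewrite sumn_S, IHn, H; [lra|lia|]. intros; apply H; lia.
Qed.

Lemma fs_sum (u : nat -> R) N : (forall j, (N < j)%nat -> u j = 0) ->
  forall n, (N <= n)%nat -> sum_n u n = sum_n u N.
Proof.
  intros H n Hn. induction Hn; auto.
  rewrite sumn_S, IHHn, H; [lra|lia].
Qed.

Lemma fs_is_series (u : nat -> R) N : (forall j, (N < j)%nat -> u j = 0) ->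
  is_series u (sum_n u N).
Proof.
  intros H. change (is_lim_seq (sum_n u) (sum_n u N)).
  apply is_lim_seq_ext_loc with (fun _ => sum_n u N); [|apply is_lim_seq_const].
  exists N. intros n Hn. symmetry. apply fs_sum; [exact H|lia].
Qed.

Lemma fs_Series (u : nat -> R) N : (forall j, (N < j)%nat -> u j = 0) ->
  Series u = sum_n u N.
Proof. intros H. apply is_series_unique, fs_is_series, H. Qed.

Lemma fs_ex (u : nat -> R) N : (forall j, (N < j)%nat -> u j = 0) -> ex_series u.
Proof. intros H. eexists. exact (fs_is_series u N H). Qed.

Lemma cc_bound x : cc x -> exists N, forall j, (N < j)%nat -> x j = 0.
Proof. intros [N H]. exists N. intros j Hj. apply H. lia. Qed.

Definition sp (k : nat) (c : R) : seqR := fun j => if Nat.eqb j k then c else 0.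

Lemma Series_sp k c : Series (sp k c) = c.
Proof.
  rewrite (fs_Series _ k).
  - destruct k.
    + rewrite sum_O. reflexivity.
    + rewrite sumn_S, sumn_zero.
      * unfold sp. rewrite Nat.eqb_refl. lra.
      * intros j Hj. unfold sp. destruct (Nat.eqb_spec j (S k)); [lia|reflexivity].
  - intros j Hj. unfold sp. destruct (Nat.eqb_spec j k); [lia|reflexivity].
Qed.

Lemma cc_sp k c : cc (sp k c).
Proof. exists (S k). intros j Hj. unfold sp. destruct (Nat.eqb_spec j k); [lia|reflexivity]. Qed.

Definition v2 (k : nat) : R := / (INR (S k))^2.

Lemma INRS_pos k : 0 < INR (S k).
Proof. apply lt_0_INR. lia. Qed.

Lemma v2_bound n : sum_n v2 n <= 2 - / INR (S n).
Proof.
  induction n.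
  - rewrite sum_O. unfold v2. simpl. lra.
  - rewrite sumn_S. unfold v2 at 2.
    assert (Hp := INRS_pos n).
    rewrite (S_INR (S n)).
    assert (E : / (INR (S n) + 1) ^ 2 + / (INR (S n) + 1) - / INR (S n)
               = - / (INR (S n) * (INR (S n) + 1)^2)) by (field; lra).
    assert (0 < / (INR (S n) * (INR (S n) + 1)^2)).
    { apply Rinv_0_lt_compat. apply Rmult_lt_0_compat; [lra|]. nra. }
    lra.
Qed.

Lemma ex_v2 : ex_series v2.
Proof.
  destruct (ex_finite_lim_seq_incr (sum_n v2) 2) as [l Hl].
  - intros n. rewrite sumn_S. unfold v2. assert (H:=INRS_pos (S n)).
    assert (0 < / INR (S (S n)) ^ 2) by (apply Rinv_0_lt_compat; nra). lra.
  - intros n. pose proof (v2_bound n). pose proof (INRS_pos n).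
    assert (0 < / INR (S n)) by (apply Rinv_0_lt_compat; lra). lra.
  - exists l. exact Hl.
Qed.

Lemma exs_ext (a b : nat -> R) : (forall n, a n = b n) -> ex_series a -> ex_series b.
Proof. intros H Ha. exact (ex_series_ext a b H Ha). Qed.

Definition w (k : nat) : R := (INR (S k))^2.
Definition ft (x : seqR) (k : nat) : R := (INR (S k))^2 / 2 * (x k - / (INR (S k))^2)^2.

Lemma w_pos k : 0 < w k.
Proof. unfold w. pose proof (INRS_pos k). nra. Qed.

Lemma ft_nonneg x k : 0 <= ft x k.
Proof. unfold ft, Rdiv. apply Rmult_le_pos; [apply Rmult_le_pos; [apply pow2_ge_0|lra]|apply pow2_ge_0]. Qed.

Lemma ft0 k : ft zero_seq k = / 2 * v2 k.
Proof. unfold ft, zero_seq, v2. pose proof (INRS_pos k). field. apply Rgt_not_eq; lra. Qed.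

Lemma ex_ft0 : ex_series (ft zero_seq).
Proof.
  apply exs_ext with (fun k => v2 k * / 2).
  - intros; rewrite ft0; ring.
  - apply ex_series_scal_r, ex_v2.
Qed.

Lemma ex_ft x : cc x -> ex_series (ft x).
Proof.
  intros Hx. destruct (cc_bound x Hx) as [N HN].
  apply exs_ext with (fun k => plus (ft zero_seq k) (ft x k - ft zero_seq k)).
  - intros k. unfold plus; simpl. ring.
  - assert (H2 : ex_series (fun k => ft x k - ft zero_seq k)).
    { apply (fs_ex _ N). intros j Hj. unfold ft, zero_seq. rewrite HN by exact Hj. ring. }
    exact (ex_series_plus _ _ ex_ft0 H2).
Qed.

Lemma Series_ge_term u k : ex_series u -> (forall j, 0 <= u j) -> u k <= Series u.
Proof.
  intros Hu Hp. rewrite <- (Series_sp k (u k)). apply Series_le; auto.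
  intros n. unfold sp. destruct (Nat.eqb_spec n k); subst; split; auto; lra.
Qed.

Lemma Series_ge_partial u n : ex_series u -> (forall j, 0 <= u j) -> sum_n u n <= Series u.
Proof.
  intros Hu Hp. rewrite (Series_incr_n u (S n)) by (lia || exact Hu).
  simpl pred. rewrite sum_n_Reals.
  assert (0 <= Series (fun k => u (S n + k)%nat)).
  { rewrite <- (Series_sp 0 0). apply Series_le.
    - intros m. unfold sp. destruct (Nat.eqb m 0); split; auto; lra.
    - now apply (ex_series_incr_n u (S n)). }
  lra.
Qed.

Lemma sq_l2 v : cc v -> forall k, Rabs (v k) <= norm2 v.
Proof.
  intros Hv k. destruct (cc_bound v Hv) as [N HN].
  unfold norm2. rewrite <- sqrt_Rsqr_abs. apply sqrt_le_1_alt.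
  unfold Rsqr. replace (v k * v k) with (v k ^ 2) by ring.
  apply (Series_ge_term (fun j => v j ^ 2) k).
  - apply (fs_ex _ N). intros j Hj. rewrite HN by exact Hj. ring.
  - intros j. nra.
Qed.

Lemma f7_eq x : f7 x = Finite (Series (ft x)).
Proof. reflexivity. Qed.

Lemma cc_sub x y : cc x -> cc y -> cc (seq_sub y x).
Proof.
  intros [N1 H1] [N2 H2]. exists (N1 + N2)%nat. intros k Hk. unfold seq_sub.
  rewrite H1, H2 by lia. ring.
Qed.

Lemma g7_zero : g7 zero_seq = Finite 0.
Proof. unfold g7. destruct (excluded_middle_informative _) as [_|C]; [reflexivity|].
  exfalso; apply C; reflexivity. Qed.

Lemma part1 z : subdiff (hsum f7 g7) zero_seq z <-> l2 z.
Proof.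
  split; [intros [H _]; exact H|]. intros Hz; split; [exact Hz|]. intros y Hy.
  unfold hsum. rewrite g7_zero.
  unfold g7. destruct (excluded_middle_informative (forall k, y k = 0)) as [Y|Y].
  - assert (E1 : pairing z (seq_sub y zero_seq) = 0).
    { unfold pairing. rewrite (Series_ext _ (sp 0 0)), Series_sp; [reflexivity|].
      intros n. unfold seq_sub, zero_seq, sp. rewrite Y. destruct (Nat.eqb n 0); ring. }
    assert (E2 : Series (ft y) = Series (ft zero_seq)).
    { apply Series_ext. intros n. unfold ft, zero_seq. rewrite Y. reflexivity. }
    rewrite E1, !f7_eq, E2. simpl. lra.
  - rewrite !f7_eq. simpl. trivial.
Qed.

Lemma not_l2_const a : (forall k, a k = -1) -> ~ l2 a.
Proof.
  intros Ha Hl. unfold l2 in Hl.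
  assert (H1 : ex_series (fun _ : nat => 1)).
  { apply exs_ext with (fun k => a k ^ 2); [|exact Hl]. intros n; rewrite Ha; ring. }
  apply ex_series_lim_0, is_lim_seq_unique in H1.
  rewrite Lim_seq_const in H1. injection H1. lra.
Qed.

Lemma subf_empty a : ~ subdiff f7 zero_seq a.
Proof.
  intros [Hl H]. apply (not_l2_const a); [|exact Hl].
  intros k.
  assert (Hin : forall t, (a k + 1) * t <= INR (S k) ^ 2 * t ^ 2 / 2).
  { intros t. specialize (H (sp k t) (cc_sp k t)).
    assert (E1 : pairing a (seq_sub (sp k t) zero_seq) = a k * t).
    { unfold pairing. rewrite (Series_ext _ (sp k (a k * t))), Series_sp; [reflexivity|].
      intros n. unfold seq_sub, zero_seq, sp. destruct (Nat.eqb_spec n k); subst; ring. }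
    set (d := INR (S k) ^ 2 * t ^ 2 / 2 - t).
    assert (E2 : Series (ft (sp k t)) = Series (ft zero_seq) + d).
    { rewrite <- (Series_sp k d). rewrite <- Series_plus; [|apply ex_ft0|apply (fs_ex _ k)].
      - apply Series_ext. intros n. unfold sp, ft, zero_seq, d.
        destruct (Nat.eqb_spec n k).
        + subst. pose proof (INRS_pos k). field. apply Rgt_not_eq; lra.
        + ring.
      - intros j Hj. unfold sp. destruct (Nat.eqb_spec j k); [lia|reflexivity]. }
    rewrite E1, !f7_eq, E2 in H. simpl in H. unfold d in H. lra. }
  pose proof (INRS_pos k) as Hp. set (W := INR (S k) ^ 2) in *.
  assert (HW : 0 < W) by (unfold W; nra).
  set (e := a k + 1) in *. set (q := e / W).
  assert (Eq : e = W * q) by (unfold q; field; lra).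
  specialize (Hin q). rewrite Eq in Hin.
  assert (H0 : W * (q * q) <= 0) by (replace (W*(q*q)) with (2*((W*q)*q) - W*q^2) by ring; lra).
  assert (H1 : q * q <= 0).
  { destruct (Rle_or_lt (q*q) 0) as [h|h]; [exact h|]. pose proof (Rmult_lt_0_compat _ _ HW h). lra. }
  assert (q = 0) by nra.
  assert (e = 0) by (rewrite Eq; subst; nra).
  unfold e in *. lra.
Qed.

Lemma part_core : core (setdiff (dom f7) (dom g7)) zero_seq.
Proof.
  split.
  - exists zero_seq, zero_seq. split; [|split].
    + split; [exists 0%nat; reflexivity|]. rewrite f7_eq. discriminate.
    + split; [exists 0%nat; reflexivity|]. rewrite g7_zero. discriminate.
    + intros k. unfold zero_seq. ring.
  - intros d [N Hd]. exists 1. split; [lra|]. intros t _.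
    exists (fun k => zero_seq k + t * d k), zero_seq. split; [|split].
    + split.
      * exists N. intros k Hk. unfold zero_seq. rewrite Hd by exact Hk. ring.
      * rewrite f7_eq. discriminate.
    + split; [exists 0%nat; reflexivity|]. rewrite g7_zero. discriminate.
    + intros k. unfold zero_seq. ring.
Qed.

Lemma ft_convex x y l k : 0 < l < 1 ->
  ft (fun j => l * x j + (1 - l) * y j) k <= l * ft x k + (1 - l) * ft y k.
Proof.
  intros Hl. unfold ft. set (W := INR (S k) ^ 2). set (c := / W).
  assert (HW : 0 <= W) by (unfold W; apply pow2_ge_0).
  set (a := x k - c). set (b := y k - c).
  replace (l * x k + (1 - l) * y k - c) with (l * a + (1 - l) * b) by (unfold a, b; ring).
  replace (x k - c) with a by reflexivity. replace (y k - c) with b by reflexivity.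
  assert (E : l * (W / 2 * a ^ 2) + (1 - l) * (W / 2 * b ^ 2) - W / 2 * (l * a + (1 - l) * b) ^ 2
             = (W / 2) * (l * (1 - l) * (a - b) ^ 2)) by (unfold Rdiv; ring).
  assert (0 <= (W / 2) * (l * (1 - l) * (a - b) ^ 2)).
  { apply Rmult_le_pos; [lra|]. apply Rmult_le_pos; [nra|apply pow2_ge_0]. }
  lra.
Qed.

Lemma convex_f : convex_cc f7.
Proof.
  intros x y Hx Hy l Hl. rewrite !f7_eq. cbn [Rbar_mult Rbar_mult' Rbar_plus Rbar_plus' Rbar_le].
  assert (Ex1 : ex_series (fun n => l * ft x n)).
  { apply exs_ext with (fun n => ft x n * l); [intros; ring|apply ex_series_scal_r, ex_ft, Hx]. }
  assert (Ex2 : ex_series (fun n => (1 - l) * ft y n)).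
  { apply exs_ext with (fun n => ft y n * (1 - l)); [intros; ring|apply ex_series_scal_r, ex_ft, Hy]. }
  rewrite <- !Series_scal_l, <- Series_plus by assumption.
  apply Series_le.
  - intros n. split; [apply ft_nonneg|apply ft_convex; exact Hl].
  - pose proof (ex_series_plus _ _ Ex1 Ex2) as H. exact H.
Qed.

Lemma mult_pinf l : 0 < l -> Rbar_mult (Finite l) p_infty = p_infty.
Proof.
  intros Hl. unfold Rbar_mult, Rbar_mult'.
  destruct (Rle_dec 0 l); [|lra].
  destruct (Rle_lt_or_eq_dec 0 l r); [reflexivity|lra].
Qed.

Lemma g7_cases x : g7 x = Finite 0 \/ g7 x = p_infty.
Proof. unfold g7. destruct (excluded_middle_informative _); auto. Qed.

Lemma convex_g : convex_cc g7.
Proof.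
  intros x y Hx Hy l Hl.
  destruct (excluded_middle_informative (forall k, x k = 0)) as [X|X];
  [destruct (excluded_middle_informative (forall k, y k = 0)) as [Y|Y]|].
  - assert (G : g7 (fun k => l * x k + (1 - l) * y k) = Finite 0).
    { unfold g7. destruct (excluded_middle_informative _) as [_|C]; [reflexivity|].
      exfalso; apply C; intros k; rewrite X, Y; ring. }
    assert (Gx : g7 x = Finite 0) by (unfold g7; destruct (excluded_middle_informative _); tauto).
    assert (Gy : g7 y = Finite 0) by (unfold g7; destruct (excluded_middle_informative _); tauto).
    rewrite G, Gx, Gy. simpl. lra.
  - assert (Gy : g7 y = p_infty) by (unfold g7; destruct (excluded_middle_informative _) as [h|h]; [exfalso; exact (Y h)|reflexivity]).
    assert (Gx : g7 x = Finite 0) by (unfold g7; destruct (excluded_middle_informative _) as [h|h]; [reflexivity|exfalso; exact (h X)]).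
    rewrite Gy, Gx, (mult_pinf (1 - l)) by lra. simpl.
    destruct (g7_cases (fun k => l * x k + (1 - l) * y k)) as [E'|E']; rewrite E'; simpl; trivial.
  - assert (Gx : g7 x = p_infty) by (unfold g7; destruct (excluded_middle_informative _) as [h|h]; [exfalso; exact (X h)|reflexivity]).
    rewrite Gx, (mult_pinf l) by lra.
    destruct (g7_cases y) as [E|E]; rewrite E; [|rewrite (mult_pinf (1 - l)) by lra]; simpl;
    destruct (g7_cases (fun k => l * x k + (1 - l) * y k)) as [E'|E']; rewrite E'; simpl; trivial.
Qed.

Lemma lsc_g : lsc_cc g7.
Proof.
  intros x Hx M HM.
  destruct (excluded_middle_informative (forall k, x k = 0)) as [X|X].
  - assert (Gx : g7 x = Finite 0) by (unfold g7; destruct (excluded_middle_informative _); tauto).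
    rewrite Gx in HM. simpl in HM.
    exists 1. split; [lra|]. intros y _ _.
    destruct (g7_cases y) as [E|E]; rewrite E; simpl; trivial.
  - apply not_all_ex_not in X. destruct X as [k Xk].
    exists (Rabs (x k)). split; [apply Rabs_pos_lt; exact Xk|].
    intros y Hy Hn.
    assert (Gy : g7 y = p_infty).
    { unfold g7. destruct (excluded_middle_informative _) as [Y|Y]; [|reflexivity].
      exfalso. pose proof (sq_l2 _ (cc_sub x y Hx Hy) k) as Hk.
      assert (Ek : seq_sub y x k = - x k) by (unfold seq_sub; rewrite Y; ring).
      rewrite Ek, Rabs_Ropp in Hk. lra. }
    rewrite Gy. simpl. trivial.
Qed.

Lemma sum_lower (a b c : nat -> R) d : (forall k, b k - c k * d <= a k) ->
  forall n, sum_n b n - sum_n c n * d <= sum_n a n.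
Proof.
  intros H n. induction n.
  - rewrite !sum_O. apply H.
  - rewrite !sumn_S. specialize (H (S n)).
    replace (sum_n b n + b (S n) - (sum_n c n + c (S n)) * d)
      with ((sum_n b n - sum_n c n * d) + (b (S n) - c (S n) * d)) by ring.
    lra.
Qed.

Lemma sum_nonneg (c : nat -> R) : (forall k, 0 <= c k) -> forall n, 0 <= sum_n c n.
Proof.
  intros H n. induction n.
  - rewrite sum_O. apply H.
  - rewrite sumn_S. pose proof (H (S n)). lra.
Qed.

Lemma ring_id (W p q : R) : W / 2 * q ^ 2 - W / 2 * p ^ 2 = W * (p * (q - p)) + W / 2 * (q - p) ^ 2.
Proof. field. Qed.

Lemma lsc_f : lsc_cc f7.
Proof.
  intros x Hx M HM. rewrite f7_eq in HM. simpl in HM.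
  pose proof (Series_correct _ (ex_ft x Hx)) as Hs.
  assert (Hs' : is_lim_seq (sum_n (ft x)) (Series (ft x))) by exact Hs.
  apply is_lim_seq_spec in Hs'.
  assert (Hpos : 0 < Series (ft x) - M) by lra.
  destruct (Hs' (mkposreal _ Hpos)) as [Nb HN]. specialize (HN Nb (le_n Nb)). simpl in HN.
  apply Rabs_def2 in HN. destruct HN as [HN1 HN2].
  set (DD := sum_n (ft x) Nb - M).
  assert (HD : 0 < DD) by (unfold DD; lra).
  set (cf := fun k => INR (S k) ^ 2 * Rabs (x k - / INR (S k) ^ 2)).
  set (CC := (sum_n cf Nb : R)).
  assert (HC : 0 <= CC).
  { apply sum_nonneg. intros k. unfold cf. apply Rmult_le_pos; [apply pow2_ge_0|apply Rabs_pos]. }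
  exists (DD / (CC + 1)).
  assert (Hdel : 0 < DD / (CC + 1)) by (apply Rdiv_lt_0_compat; lra).
  split; [exact Hdel|].
  intros y Hy Hn.
  assert (Hk : forall k, Rabs (y k - x k) < DD / (CC + 1)).
  { intros k. pose proof (sq_l2 _ (cc_sub x y Hx Hy) k) as H. change (seq_sub y x k) with (y k - x k) in H. lra. }
  assert (Hterm : forall k, ft x k - cf k * (DD / (CC + 1)) <= ft y k).
  { intros k. unfold ft, cf. set (W := INR (S k) ^ 2). set (del := DD / (CC + 1)) in *.
    assert (HW : 0 <= W) by (unfold W; apply pow2_ge_0).
    set (p := x k - / W). set (q := y k - / W).
    assert (Eqp : q - p = y k - x k) by (unfold p, q; ring).
    assert (A1 : Rabs (p * (q - p)) <= Rabs p * del).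
    { rewrite Rabs_mult. apply Rmult_le_compat_l; [apply Rabs_pos|]. rewrite Eqp. left. apply Hk. }
    assert (A2 : - Rabs (p * (q - p)) <= p * (q - p)).
    { pose proof (Rle_abs (- (p * (q - p)))) as h. rewrite Rabs_Ropp in h. lra. }
    assert (A3 : W * (- (Rabs p * del)) <= W * (p * (q - p))).
    { apply Rmult_le_compat_l; [exact HW|]. lra. }
    assert (A4 : 0 <= W / 2 * (q - p) ^ 2).
    { apply Rmult_le_pos; [lra|apply pow2_ge_0]. }
    assert (E : W / 2 * q ^ 2 - W / 2 * p ^ 2 = W * (p * (q - p)) + W / 2 * (q - p) ^ 2).
    { apply ring_id. }
    assert (E2 : W * Rabs p * del = - (W * (- (Rabs p * del)))) by ring. clearbody W p q del.
    set (A := W / 2 * q ^ 2) in *. set (B := W / 2 * p ^ 2) in *. set (F := W * - (Rabs p * del)) in *.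
    set (G := W * (p * (q - p))) in *. set (H := W / 2 * (q - p) ^ 2) in *. set (I := W * Rabs p * del) in *.
    clearbody A B F G H I. clear - A3 A4 E E2.
    replace A with (B + (G + H)) by (rewrite <- E; ring). rewrite E2. unfold Rminus. rewrite Ropp_involutive.
    apply Rplus_le_compat_l. replace F with (F + 0) by ring. apply Rplus_le_compat; assumption. }
  pose proof (sum_lower _ _ _ _ Hterm Nb) as Hsum. fold CC in Hsum.
  assert (Hge : sum_n (ft y) Nb <= Series (ft y)) by exact (Series_ge_partial (ft y) Nb (ex_ft y Hy) (ft_nonneg y)).
  assert (EC : CC * (DD / (CC + 1)) = DD - DD / (CC + 1)) by (field; lra).
  rewrite f7_eq. simpl.
  assert (HDD : DD = sum_n (ft x) Nb - M) by reflexivity.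
  assert (HCC : CC = sum_n cf Nb) by reflexivity.
  set (T := DD / (CC + 1)) in *. clearbody T DD CC. lra.
Qed.

Theorem mainTheorem7 :
  (forall z, subdiff (hsum f7 g7) zero_seq z <-> l2 z) /\
  (forall z, ~ setsum (subdiff f7 zero_seq) (subdiff g7 zero_seq) z) /\
  (exists z, subdiff (hsum f7 g7) zero_seq z /\
             ~ setsum (subdiff f7 zero_seq) (subdiff g7 zero_seq) z) /\
  core (setdiff (dom f7) (dom g7)) zero_seq /\
  convex_cc f7 /\ convex_cc g7 /\ lsc_cc f7 /\ lsc_cc g7.
Proof.
  assert (P2 : forall z, ~ setsum (subdiff f7 zero_seq) (subdiff g7 zero_seq) z).
  { intros z [a [b [Ha _]]]. exact (subf_empty a Ha). }
  split; [exact part1|]. split; [exact P2|]. split.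
  - exists zero_seq. split; [|apply P2]. apply part1.
    unfold l2. apply (fs_ex _ 0). intros; unfold zero_seq; ring.
  - split; [exact part_core|]. split; [exact convex_f|]. split; [exact convex_g|].
    split; [exact lsc_f|exact lsc_g].
Qed.
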